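(* Let $\mathcal{A}=\{\alpha_1<\dots<\alpha_m\}\subset(0,1)$, $|\mathcal{A}|=m$. Let $(b_t)$ be base forecasts with $b_t\in\mathcal{K}$ and $(y_t)$ real outcomes with $|y_t-b_t^{\alpha}|\le R$ for all $\alpha\in\mathcal{A}$ and all $t$. Let $\ell_t(\theta)=\rho_{\mathcal{A}}(b_t+\theta,y_t)$. Let $\theta_1,\dots,\theta_T$ be the played offsets of MultiQT with constant delay $D\ge0$ and learning rate $\eta>0$ started from $\tilde\theta_1=\mathbf{0}$, and let $\mathcal{C}=\bigcap_{t=1}^{T+D+1}(\mathcal{K}-b_t)$. Then for every $\theta\in\mathcal{C}$, $$\mathrm{Regret}_T(\theta):=\frac1T\sum_{t=1}^T\ell_t(\theta_t)-\frac1T\sum_{t=1}^T\ell_t(\theta)\le\frac{R^2|\mathcal{A}|}{2\eta T}+2\eta|\mathcal{A}|(D+1).$$ In particular, for $\eta=\frac R2\sqrt{\frac{1}{(D+1)T}}$, $\mathrm{Regret}_T(\theta)\le\frac{2R|\mathcal{A}|\sqrt{D+1}}{\sqrt T}$.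
   Context: $\mathcal{K}=\{x\in\mathbb{R}^m:x_1\le\dots\le x_m\}$; $\Pi_C$ is Euclidean projection; $C-v=\{x-v:x\in C\}$. Quantile loss: $\rho_\alpha(\hat y,y)=\alpha|y-\hat y|$ if $y-\hat y\ge0$ and $(1-\alpha)|y-\hat y|$ otherwise; $\rho_{\mathcal{A}}(q,y)=\sum_{\alpha\in\mathcal{A}}\rho_\alpha(q^{\alpha},y)$. MultiQT with constant delay $D\ge0$: for $t=1,2,\dots$, $\theta_t=\Pi_{\mathcal{K}-b_t}(\tilde\theta_t)$, forecast $q_t=b_t+\theta_t$, $\mathrm{cov}_t^{\alpha}=\mathbb{1}\{y_t\le q_t^{\alpha}\}$, and $\tilde\theta_{t+1}^{\alpha}=\tilde\theta_t^{\alpha}-\eta(\mathrm{cov}_{t-D}^{\alpha}-\alpha)$ for $t>D$, $\tilde\theta_{t+1}=\tilde\theta_t$ for $t\le D$. *)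

(* Defs.v *)
(* R : rcfType (real closed field; needed for Num.sqrt). *)
From HB Require Import structures.
From mathcomp Require Import all_boot all_order all_algebra.
Set Implicit Arguments. Unset Strict Implicit. Unset Printing Implicit Defensive.
Import Order.TTheory GRing.Theory Num.Theory.
Local Open Scope ring_scope.

Definition in_K (R : rcfType) (m : nat) (x : 'I_m -> R) : Prop :=
  forall i j : 'I_m, (i <= j)%N -> x i <= x j.

(* x \in K - v  <->  x + v \in K *)
Definition in_K_shift (R : rcfType) (m : nat) (v x : 'I_m -> R) : Prop :=
  in_K (fun i => x i + v i).

Definition sqdist (R : rcfType) (m : nat) (x z : 'I_m -> R) : R :=
  \sum_(i < m) (x i - z i) ^+ 2.

Definition is_proj (R : rcfType) (m : nat) (C : ('I_m -> R) -> Prop)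
  (x p : 'I_m -> R) : Prop :=
  C p /\ forall z, C z -> sqdist x p <= sqdist x z.

Definition rho (R : rcfType) (alpha yhat y : R) : R :=
  if 0 <= y - yhat then alpha * `|y - yhat| else (1 - alpha) * `|y - yhat|.

Definition rhoA (R : rcfType) (m : nat) (alpha : 'I_m -> R) (q : 'I_m -> R) (y : R) : R :=
  \sum_(i < m) rho (alpha i) (q i) y.

Definition cov (R : rcfType) (m : nat) (y : nat -> R) (b theta : nat -> 'I_m -> R)
  (t : nat) (i : 'I_m) : R := if y t <= b t i + theta t i then 1 else 0.

(* MultiQT with constant delay D, learning rate eta, from tilde-theta_1 = 0.
   Time indices start at 1; index 0 is unused. *)
Definition multiQT (R : rcfType) (m : nat) (alpha : 'I_m -> R)
  (b : nat -> 'I_m -> R) (y : nat -> R) (D : nat) (eta : R)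
  (thetat theta : nat -> 'I_m -> R) : Prop :=
  (forall i, thetat 1%N i = 0) /\
  (forall t, (1 <= t)%N -> is_proj (in_K_shift (b t)) (thetat t) (theta t)) /\
  (forall t, (1 <= t)%N -> (t <= D)%N -> forall i, thetat t.+1 i = thetat t i) /\
  (forall t, (D < t)%N -> forall i,
      thetat t.+1 i = thetat t i
        - eta * (cov y b theta (t - D)%N i - alpha i)).

Definition regret (R : rcfType) (m : nat) (alpha : 'I_m -> R)
  (b : nat -> 'I_m -> R) (y : nat -> R) (T : nat)
  (theta : nat -> 'I_m -> R) (th : 'I_m -> R) : R :=
  T%:R^-1 * (\sum_(1 <= t < T.+1) rhoA alpha (fun i => b t i + theta t i) (y t))
  - T%:R^-1 * (\sum_(1 <= t < T.+1) rhoA alpha (fun i => b t i + th i) (y t)).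

(* Main.v *)
Require Import Defs.
From HB Require Import structures.
From mathcomp Require Import all_boot all_order all_algebra.
From mathcomp Require Import lra ring zify.
Import Order.TTheory GRing.Theory Num.Theory.
Set Implicit Arguments. Unset Strict Implicit. Unset Printing Implicit Defensive.
Local Open Scope ring_scope.


Lemma rhoE (R : rcfType) (a q y : R) :
  rho a q y = if q <= y then a * (y - q) else (1 - a) * (q - y).
Proof.
rewrite /rho subr_ge0; case: ifP => h.
  by rewrite ger0_norm // subr_ge0.
rewrite ltr0_norm; last by rewrite subr_lt0 ltNge h.
by rewrite opprB.
Qed.

Lemma rho_sub (R : rcfType) (a q z y : R) : 0 <= a <= 1 ->
  rho a q y - rho a z y <= ((if y <= q then 1 else 0) - a) * (q - z).
Proof.
move=> /andP[a0 a1]; rewrite !rhoE.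
case: (lerP q y) => h1; case: (lerP z y) => h2; case: (lerP y q) => h3; nra.
Qed.

Definition clip (R : rcfType) (Rb x : R) : R :=
  if x < - Rb then - Rb else if Rb < x then Rb else x.

Lemma clip_bound (R : rcfType) (Rb x : R) : 0 <= Rb -> `|clip Rb x| <= Rb.
Proof.
move=> h; rewrite /clip; case: ifP => h1.
  by rewrite normrN ger0_norm.
case: ifP => h2; first by rewrite ger0_norm.
rewrite ler_norml; apply/andP; split; lra.
Qed.

Lemma rho_clip (R : rcfType) (a y bb x Rb : R) : 0 <= a <= 1 ->
  `|y - bb| <= Rb -> rho a (bb + clip Rb x) y <= rho a (bb + x) y.
Proof.
move=> /andP[a0 a1]; rewrite ler_norml => /andP[h1 h2].
rewrite /clip; case: (ltrP x (- Rb)) => c1.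
  rewrite !rhoE.
  have d1 : bb + - Rb <= y by lra.
  have d2 : bb + x <= y by lra.
  rewrite d1 d2; have : 0 <= a * (- Rb - x) by apply: mulr_ge0; lra.
  nra.
case: (ltrP Rb x) => c2; last by [].
rewrite !rhoE.
have d2 : y < bb + x by lra.
rewrite (_ : (bb + x <= y) = false); last by apply/negbTE; rewrite -ltNge.
case: (lerP (bb + Rb) y) => d3.
  have : 0 <= (1 - a) * (x - Rb) by apply: mulr_ge0; lra.
  nra.
have : 0 <= (1 - a) * (x - Rb) by apply: mulr_ge0; lra.
nra.
Qed.



Lemma VI (R : rcfType) m (bb x p w : 'I_m -> R) :
  is_proj (in_K_shift bb) x p -> in_K (fun i => p i + bb i + w i) ->
  \sum_i (x i - p i) * w i <= 0.
Proof.
move=> [Cp Hmin] Hw.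
set A := \sum_i (x i - p i) * w i.
set B := \sum_i w i ^+ 2.
have B0 : 0 <= B by apply: sumr_ge0 => i _; apply: sqr_ge0.
have key : forall e, 0 < e <= 1 -> 2 * e * A <= e ^+ 2 * B.
  move=> e /andP[e0 e1].
  have Cz : in_K_shift bb (fun i => p i + e * w i).
    move=> i j ij; have h1 := Cp i j ij; have h2 := Hw i j ij.
    rewrite /= in h1 h2 *.
    have : 0 <= (1 - e) * (p j + bb j - (p i + bb i)) by apply: mulr_ge0; lra.
    have : 0 <= e * (p j + bb j + w j - (p i + bb i + w i)) by apply: mulr_ge0; lra.
    nra.
  have := Hmin _ Cz; rewrite /sqdist.
  have -> : \sum_i (x i - (p i + e * w i)) ^+ 2
            = \sum_i (x i - p i) ^+ 2 - 2 * e * A + e ^+ 2 * B.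
    rewrite /A /B !mulr_sumr -sumrB -big_split /=.
    by apply: eq_bigr => i _; ring.
  lra.
rewrite leNgt; apply/negP => A0.
have AB0 : 0 < A + B by lra.
set e := A / (A + B).
have eAB : e * (A + B) = A by rewrite /e mulfVK // gt_eqF.
have e0 : 0 < e by rewrite /e divr_gt0.
have e1 : e <= 1 by rewrite /e ler_pdivrMr // mul1r; lra.
have := key e; rewrite e0 e1 => /(_ isT) h.
have h2 : 2 * A <= e * B.
  rewrite -(ler_pM2l e0); rewrite expr2 in h; lra.
nra.
Qed.



Lemma proj_grad (R : rcfType) m (alpha bb x p : 'I_m -> R) (yy : R) :
  (forall i j : 'I_m, (i < j)%N -> alpha i < alpha j) ->
  is_proj (in_K_shift bb) x p ->
  \sum_i ((if yy <= bb i + p i then 1 else 0) - alpha i) * (p i - x i) <= 0.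
Proof.
move=> Ha Hp; have Cp := Hp.1.
set cv := fun i => if yy <= bb i + p i then (1 : R) else 0.
have S1 : \sum_i (x i - p i) * alpha i <= 0.
  apply: (VI Hp) => i j; rewrite leq_eqVlt => /orP[/eqP/val_inj -> // | ij].
  have := Cp i j (ltnW ij); have := Ha i j ij; rewrite /=; lra.
set s := \big[Order.min/1]_(k | p k + bb k < yy) (yy - (p k + bb k)).
have s0 : 0 < s.
  apply: (big_ind (fun v => 0 < v)) => //.
    by move=> u v u0 v0; rewrite lt_min u0 v0.
  by move=> k; rewrite subr_gt0.
have sle : forall k, p k + bb k < yy -> s <= yy - (p k + bb k).
  by move=> k hk; rewrite /s (bigD1 k) //= ge_min lexx.
have S2 : \sum_i (x i - p i) * (- (s * cv i)) <= 0.
  apply: (VI Hp) => i j ij; have h := Cp i j ij; rewrite /= in h *.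
  rewrite /cv; case: (lerP yy (bb i + p i)) => c1; case: (lerP yy (bb j + p j)) => c2.
  - lra.
  - lra.
  - have := sle i; rewrite addrC => /(_ c1); lra.
  - lra.
set C := \sum_i (x i - p i) * cv i.
have E2 : \sum_i (x i - p i) * (- (s * cv i)) = - (s * C).
  rewrite /C mulr_sumr -sumrN; apply: eq_bigr => i _; ring.
have E1 : \sum_i ((if yy <= bb i + p i then 1 else 0) - alpha i) * (p i - x i)
          = \sum_i (x i - p i) * alpha i - C.
  rewrite /C -sumrB; apply: eq_bigr => i _; rewrite /cv; case: (yy <= _); ring.
rewrite E1; rewrite E2 in S2.
have C0 : 0 <= C.
  rewrite -(pmulr_rge0 _ s0); lra.
lra.
Qed.



Lemma phi_id (R : rcfType) (g : nat -> R) (T : nat) :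
  2 * \sum_(1 <= t < T.+1) g t * \sum_(1 <= s < t) g s
  = (\sum_(1 <= s < T.+1) g s) ^+ 2 - \sum_(1 <= t < T.+1) g t ^+ 2.
Proof.
elim: T => [|T IH]; first by rewrite !big_geq // mulr0 expr2 mulr0 subrr.
rewrite !(big_nat_recr T.+1) //= mulrDr IH; ring.
Qed.

Lemma sum_seg (R : rcfType) (g : nat -> R) (a b : nat) :
  (forall s, `|g s| <= 1) -> `|\sum_(a <= s < b) g s| <= (b - a)%:R.
Proof.
move=> hg; apply: (le_trans (ler_norm_sum _ _ _)).
rewrite -[X in _ <= X]mulr1 -sumr_const_nat mulr1.
by apply: ler_sum => s _.
Qed.

Lemma delay_bd (R : rcfType) (g : nat -> R) (D t : nat) :
  (forall s, `|g s| <= 1) ->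
  g t * (\sum_(1 <= s < t) g s - \sum_(1 <= s < t - D) g s) <= D%:R.
Proof.
move=> hg.
set X := (\sum_(1 <= s < t) g s - \sum_(1 <= s < t - D) g s).
have hX : `|X| <= D%:R.
  case: (leqP (t - D) 1) => h.
    rewrite /X (big_geq (m := 1) (n := t - D)) // subr0.
    apply: (le_trans (sum_seg 1 t hg)); rewrite ler_nat; lia.
  rewrite /X (big_cat_nat (n := t - D)) /=; [|lia|lia].
  rewrite addrAC subrr add0r.
  apply: (le_trans (sum_seg (t - D) t hg)); rewrite ler_nat; lia.
apply: (le_trans (ler_norm _)); rewrite normrM.
rewrite -[X in _ <= X]mul1r; apply: ler_pM => //.
Qed.

Lemma gd (R : rcfType) (eta c : R) (g : nat -> R) (D T : nat) :
  0 < eta -> (forall s, `|g s| <= 1) ->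
  \sum_(1 <= t < T.+1) g t * (- eta * \sum_(1 <= s < t - D) g s - c)
   <= c ^+ 2 / (2 * eta) + eta * T%:R / 2 + eta * (D * T)%:R.
Proof.
move=> e0 hg.
set P := \sum_(1 <= s < T.+1) g s.
set Q := \sum_(1 <= t < T.+1) g t ^+ 2.
set GP := \sum_(1 <= t < T.+1) g t * \sum_(1 <= s < t) g s.
set DL := \sum_(1 <= t < T.+1) g t * (\sum_(1 <= s < t) g s - \sum_(1 <= s < t - D) g s).
have E : \sum_(1 <= t < T.+1) g t * (- eta * \sum_(1 <= s < t - D) g s - c)
         = - eta * GP + eta * DL - c * P.
  rewrite /GP /DL /P !mulr_sumr -big_split -sumrB /=; apply: eq_bigr => t _; ring.
have hGP : 2 * GP = P ^+ 2 - Q by rewrite /GP phi_id.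
have hQ : Q <= T%:R.
  have -> : (T%:R : R) = \sum_(1 <= t < T.+1) (1 : R) by rewrite sumr_const_nat subn1.
  rewrite /Q.
  apply: ler_sum => t _.
  by rewrite -real_normK ?num_real // expr_le1.
have hDL : DL <= (D * T)%:R.
  have -> : ((D * T)%:R : R) = \sum_(1 <= t < T.+1) (D%:R : R)
    by rewrite sumr_const_nat subn1 /= natrM mulr_natr.
  rewrite /DL.
  by apply: ler_sum => t _; apply: delay_bd.
have K : (eta * P + c) ^+ 2 / (2 * eta) = c ^+ 2 / (2 * eta) + eta * P ^+ 2 / 2 + c * P.
  by field; rewrite gt_eqF.
have K0 : 0 <= (eta * P + c) ^+ 2 / (2 * eta) by rewrite divr_ge0 ?sqr_ge0 // mulr_ge0 // ltW.
rewrite E.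
have : eta * DL <= eta * (D * T)%:R by rewrite ler_pM2l.
have : eta * Q <= eta * T%:R by rewrite ler_pM2l.
have hGP' : GP = (P ^+ 2 - Q) / 2 by rewrite -hGP; field.
rewrite hGP'.
lra.
Qed.



Lemma closed_form (R : rcfType) m (alpha : 'I_m -> R) (b : nat -> 'I_m -> R)
  (y : nat -> R) (D : nat) (eta : R) (thetat theta : nat -> 'I_m -> R) :
  multiQT alpha b y D eta thetat theta -> forall t, (1 <= t)%N -> forall i,
  thetat t i = - eta * \sum_(1 <= s < t - D) (cov y b theta s i - alpha i).
Proof.
move=> [h1 [_ [h3 h4]]]; elim=> [//|t IH] _ i.
case: (posnP t) => [->|t1].
  by rewrite h1 big_geq ?mulr0 // leq_subr.
case: (leqP t D) => tD.
  rewrite h3 // IH // !big_geq //; lia.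
rewrite h4 // IH // subSn; last by apply: ltnW.
rewrite big_nat_recr /=; last lia.
ring.
Qed.



Unset Implicit Arguments.


Lemma main_sum (R : rcfType) (m : nat) (alpha : 'I_m -> R)
  (b : nat -> 'I_m -> R) (y : nat -> R) (Rb : R) (D T : nat) (eta : R)
  (thetat theta : nat -> 'I_m -> R) :
  (forall i j : 'I_m, (i < j)%N -> alpha i < alpha j) ->
  (forall i, 0 < alpha i < 1) ->
  (forall t, (1 <= t)%N -> forall i, `|y t - b t i| <= Rb) ->
  0 < eta ->
  multiQT alpha b y D eta thetat theta -> forall th : 'I_m -> R, 
  \sum_(1 <= t < T.+1) rhoA alpha (fun i => b t i + theta t i) (y t)
            - \sum_(1 <= t < T.+1) rhoA alpha (fun i => b t i + th i) (y t)
            <= \sum_(1 <= t < T.+1) \sum_i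
                 (cov y b theta t i - alpha i) * (- eta * \sum_(1 <= s < t - D) (cov y b theta s i - alpha i) - clip Rb (th i)).
Proof.
move=> Ha Hab Hy e0 MQ th.
set c := fun i => clip Rb (th i).
set g := fun s i => cov y b theta s i - alpha i.
rewrite -sumrB.
apply: ler_sum_nat => t /andP[t1 _].
rewrite /rhoA -sumrB.
have Hp := (MQ.2.1 t t1).
have PG := proj_grad (y t) Ha Hp.
apply: (@le_trans _ _ (\sum_i g t i * (theta t i - c i))).
  apply: ler_sum => i _.
  have aa : 0 <= alpha i <= 1 by have := Hab i => /andP[a0 a1]; rewrite !ltW.
  have h1 := rho_clip (th i) aa (Hy t t1 i).
  have h2 := rho_sub (b t i + theta t i) (b t i + clip Rb (th i)) (y t) aa.
  rewrite /g /cov /c.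
  move: h2; rewrite (_ : b t i + theta t i - (b t i + clip Rb (th i)) = theta t i - clip Rb (th i)); last by ring.
  move=> h2; apply: le_trans h2; rewrite lerD2l lerN2; exact: h1.
have -> : \sum_i g t i * (theta t i - c i)
    = \sum_i ((if y t <= b t i + theta t i then 1 else 0) - alpha i) * (theta t i - thetat t i)
      + \sum_i g t i * (thetat t i - c i).
  rewrite -big_split /=; apply: eq_bigr => i _; rewrite /g /cov /= -mulrDr; congr (_ * _); ring.
have -> : \sum_i g t i * (thetat t i - c i)
    = \sum_i g t i * (- eta * \sum_(1 <= s < t - D) g s i - c i).
  by apply: eq_bigr => i _; rewrite (closed_form MQ t1).
lra.
Qed.


Lemma P1 (R : rcfType) (m : nat) (alpha : 'I_m -> R)
  (b : nat -> 'I_m -> R) (y : nat -> R) (Rb : R) (D T : nat) (eta : R)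
  (thetat theta : nat -> 'I_m -> R) :
  (forall i j : 'I_m, (i < j)%N -> alpha i < alpha j) ->
  (forall i, 0 < alpha i < 1) ->
  (forall t, (1 <= t)%N -> forall i, `|y t - b t i| <= Rb) ->
  (0 < T)%N ->
  0 < eta ->
  multiQT alpha b y D eta thetat theta -> forall th : 'I_m -> R, 
     regret alpha b y T theta th
       <= Rb ^+ 2 * m%:R / (2 * eta * T%:R) + 2 * eta * m%:R * (D.+1)%:R.
Proof.
move=> Ha Hab Hy T0 e0 MQ th.
have main := @main_sum R m alpha b y Rb D T eta thetat theta Ha Hab Hy e0 MQ th.
have hg : forall i s, `|cov y b theta s i - alpha i| <= 1.
  move=> i s; rewrite /cov; have := Hab i => /andP[a0 a1].
  case: ifP => _; rewrite ler_norml; apply/andP; split; lra.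
rewrite [in X in _ <= X]exchange_big /= in main.
have hRb : forall i : 'I_m, 0 <= Rb.
  by move=> i; apply: le_trans (Hy 1%N isT i); apply: normr_ge0.
have main2 : \sum_i \sum_(1 <= t < T.+1)
     (cov y b theta t i - alpha i) * (- eta * \sum_(1 <= s < t - D) (cov y b theta s i - alpha i) - clip Rb (th i))
      <= \sum_(i < m) (Rb ^+ 2 / (2 * eta) + eta * T%:R / 2 + eta * (D * T)%:R).
  apply: ler_sum => i _.
  apply: le_trans (@gd R eta (clip Rb (th i)) (fun s => cov y b theta s i - alpha i) D T e0 (hg i)) _.
  rewrite lerD2r lerD2r ler_pM2r ?invr_gt0 ?mulr_gt0 //.
  have := clip_bound (th i) (hRb i).
  set z := clip Rb (th i) => hz.
  rewrite -real_normK ?num_real // !expr2; apply: ler_pM => //; exact: normr_ge0.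
rewrite sumr_const card_ord in main2.
rewrite /regret -mulrBr.
have Tp : 0 < T%:R :> R by rewrite ltr0n.
apply: (@le_trans _ _ (T%:R^-1 * ((Rb ^+ 2 / (2 * eta) + eta * T%:R / 2 + eta * (D * T)%:R) *+ m))).
  rewrite ler_pM2l ?invr_gt0 //; exact: le_trans main main2.
have -> : T%:R^-1 * ((Rb ^+ 2 / (2 * eta) + eta * T%:R / 2 + eta * (D * T)%:R) *+ m)
  = Rb ^+ 2 * m%:R / (2 * eta * T%:R) + eta * m%:R / 2 + eta * m%:R * D%:R.
  rewrite -mulr_natr natrM; field; rewrite ?gt_eqF //.
rewrite -[(D.+1)%:R]natr1.
have : 0 <= eta * m%:R by apply: mulr_ge0 => //; exact: ltW.
have : 0 <= eta * m%:R * D%:R by apply: mulr_ge0 => //; apply: mulr_ge0 => //; exact: ltW.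
move=> h1 h2; clear main main2 hg hRb MQ Ha Hab Hy.
nra.
Qed.


Lemma bound2 (R : rcfType) (Rb eta : R) (m D T : nat) : (0 < T)%N -> 0 < eta ->
  eta = Rb / 2 * Num.sqrt (((D.+1)%:R * T%:R)^-1) ->
  Rb ^+ 2 * m%:R / (2 * eta * T%:R) + 2 * eta * m%:R * (D.+1)%:R
  <= 2 * Rb * m%:R * Num.sqrt (D.+1)%:R / Num.sqrt T%:R.
Proof.
move=> T0 e0 He.
have d0 : 0 < (D.+1)%:R :> R by rewrite ltr0n.
have t0 : 0 < T%:R :> R by rewrite ltr0n.
have sd0 : 0 < Num.sqrt (D.+1)%:R :> R by rewrite sqrtr_gt0.
have st0 : 0 < Num.sqrt T%:R :> R by rewrite sqrtr_gt0.
have hd : (D.+1)%:R = Num.sqrt (D.+1)%:R ^+ 2 :> R by rewrite sqr_sqrtr // ltW.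
have ht : T%:R = Num.sqrt T%:R ^+ 2 :> R by rewrite sqr_sqrtr // ltW.
rewrite sqrtrV ?mulr_ge0 ?ltW // sqrtrM ?ltW // in He.
have Rb0 : Rb != 0.
  apply/eqP => Rb0; move: e0; rewrite He Rb0 !mul0r; by rewrite ltxx.
rewrite He.
move: hd ht sd0 st0.
set sd := Num.sqrt (D.+1)%:R; set st := Num.sqrt T%:R => hd ht sd0 st0.
rewrite hd ht.
rewrite le_eqVlt; apply/orP; left; apply/eqP.
field.
by rewrite Rb0 !gt_eqF.
Qed.


Theorem proposition9 (R : rcfType) (m : nat) (alpha : 'I_m -> R)
  (b : nat -> 'I_m -> R) (y : nat -> R) (Rb : R) (D T : nat) (eta : R)
  (thetat theta : nat -> 'I_m -> R) :
  (forall i j : 'I_m, (i < j)%N -> alpha i < alpha j) ->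
  (forall i, 0 < alpha i < 1) ->
  (forall t, (1 <= t)%N -> in_K (b t)) ->
  (forall t, (1 <= t)%N -> forall i, `|y t - b t i| <= Rb) ->
  (0 < T)%N ->
  0 < eta ->
  multiQT alpha b y D eta thetat theta ->
  (forall th : 'I_m -> R,
     (forall t, (1 <= t <= T + D + 1)%N -> in_K_shift (b t) th) ->
     regret alpha b y T theta th
       <= Rb ^+ 2 * m%:R / (2 * eta * T%:R) + 2 * eta * m%:R * (D.+1)%:R)
  /\
  (eta = Rb / 2 * Num.sqrt (((D.+1)%:R * T%:R)^-1) ->
   forall th : 'I_m -> R,
     (forall t, (1 <= t <= T + D + 1)%N -> in_K_shift (b t) th) ->
     regret alpha b y T theta th
       <= 2 * Rb * m%:R * Num.sqrt (D.+1)%:R / Num.sqrt T%:R).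
Proof.
move=> Ha Hab Hb Hy T0 e0 MQ.
split; first by move=> th _; exact: P1 _ _ _ _ _ _ _ _ _ _ _ Ha Hab Hy T0 e0 MQ th.
move=> He th _; apply: le_trans (P1 _ _ _ _ _ _ _ _ _ _ _ Ha Hab Hy T0 e0 MQ th) _.
exact: bound2 _ _ _ _ _ _ T0 e0 He.
Qed.
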